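(* Let $X=L^2(0,1)$ and let $C:X\to X$ be the Cesàro operator $[Cx](s)=\frac1s\int_0^s x(t)\,dt$, $0<s\le1$. Let $u\in L^2(0,1)$ be given by $u(t)=0$ for $0\le t<1/2$ and $u(t)=1$ for $1/2\le t\le1$. Then there is a constant $K>0$ such that for all sufficiently large $R>0$ $$d(R):=\min\{\|u-Cw\|_{L^2(0,1)}:\ w\in L^2(0,1),\ \|w\|_{L^2(0,1)}\le R\}\le\frac KR.$$
   Context: $C$ is a bounded, injective, monotone, non-compact linear operator on $L^2(0,1)$. The function $u$ plays the role of $x^\dagger-\bar x$. *)

(* Defs.v *)
From Stdlib Require Import Reals Lra ClassicalEpsilon.
Open Scope R_scope.

(* Total Riemann integral on [a,b]: RiemannInt of f if f is Riemann
   integrable on [a,b], and 0 otherwise (the value does not depend on the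
   chosen integrability proof, by RiemannInt_P5). *)
Definition Rint (f : R -> R) (a b : R) : R :=
  match excluded_middle_informative (inhabited (Riemann_integrable f a b)) with
  | left H => RiemannInt (epsilon H (fun _ => True))
  | right _ => 0
  end.

Definition L2norm01 (f : R -> R) : R := sqrt (Rint (fun t => f t ^ 2) 0 1).

Definition cesaro (x : R -> R) (s : R) : R := / s * Rint x 0 s.

Definition u_half (t : R) : R := if Rlt_dec t (1/2) then 0 else 1.

(* Main.v *)
Require Import Defs.
From Stdlib Require Import Reals Lra ClassicalEpsilon.
From Coquelicot Require Import Coquelicot.
Open Scope R_scope.

Lemma Rint_is (f : R -> R) a b v : is_RInt f a b v -> Rint f a b = v.
Proof.
  intros H. unfold Rint.
  destruct (excluded_middle_informative _) as [H1|H1].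
  - rewrite <- RInt_Reals. apply is_RInt_unique. exact H.
  - exfalso. apply H1. constructor. apply ex_RInt_Reals_0. exists v. exact H.
Qed.

Lemma piece (f : R -> R) x y k : x <= y -> (forall t, x < t < y -> f t = k) ->
  is_RInt f x y (k * (y - x)).
Proof.
  intros Hxy Hf.
  assert (H := is_RInt_const x y k).
  replace (k * (y - x)) with (scal (y - x) k)
    by (unfold scal; simpl; unfold mult; simpl; ring).
  apply (is_RInt_ext (fun _ => k)); [|exact H].
  intros t Ht. rewrite Rmin_left in Ht by lra. rewrite Rmax_right in Ht by lra.
  symmetry; apply Hf; lra.
Qed.

Lemma piece0 (f : R -> R) x y : x <= y -> (forall t, x < t < y -> f t = 0) ->
  is_RInt f x y 0.
Proof. intros H1 H2. replace 0 with (0 * (y - x)) by ring. apply piece; assumption. Qed.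

Lemma chas (f : R -> R) a b c l1 l2 : is_RInt f a b l1 -> is_RInt f b c l2 ->
  is_RInt f a c (l1 + l2).
Proof. intros H1 H2. exact (is_RInt_Chasles f a b c l1 l2 H1 H2). Qed.

Theorem proposition4p3 :
  exists K : R, 0 < K /\
  exists R0 : R, forall Rr : R, R0 <= Rr ->
    exists w : R -> R,
      inhabited (Riemann_integrable w 0 1) /\
      L2norm01 w <= Rr /\
      L2norm01 (fun s => u_half s - cesaro w s) <= K / Rr.
Proof.
  exists 2. split; [lra|]. exists 2. intros Rr HR.
  set (d := / (Rr * Rr)).
  assert (Hd : 0 < d) by (unfold d; apply Rinv_0_lt_compat; nra).
  assert (Hd4 : d <= 1/4).
  { unfold d. replace (1/4) with (/4) by field. apply Rinv_le_contravar; nra. }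
  set (a := 1/2 - d). set (c := Rr * Rr / 2).
  assert (Hcd : c * d = 1/2) by (unfold c, d; field; lra).
  assert (Ha1 : 1/4 <= a) by (unfold a; lra).
  assert (Ha2 : a < 1/2) by (unfold a; lra).
  assert (Ha3 : 1/2 - a = d) by (unfold a; ring).
  set (w := fun t => if Rlt_dec t a then 0 else if Rlt_dec t (1/2) then c else 1).
  exists w.
  assert (hw1 : forall s, 0 <= s <= a -> is_RInt w 0 s 0).
  { intros s Hs. apply piece0; [lra|].
    intros t Ht. unfold w. destruct (Rlt_dec t a); [reflexivity|lra]. }
  assert (hw2 : forall s, a <= s <= 1/2 -> is_RInt w a s (c * (s - a))).
  { intros s Hs. apply piece; [lra|].
    intros t Ht. unfold w. destruct (Rlt_dec t a); [lra|].
    destruct (Rlt_dec t (1/2)); [reflexivity|lra]. }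
  assert (hw3 : forall s, 1/2 <= s -> is_RInt w (1/2) s (1 * (s - 1/2))).
  { intros s Hs. apply piece; [lra|].
    intros t Ht. unfold w. destruct (Rlt_dec t a); [lra|].
    destruct (Rlt_dec t (1/2)); [lra|reflexivity]. }
  assert (hW : forall s, 1/2 <= s -> is_RInt w 0 s s).
  { intros s Hs.
    replace s with ((0 + c * (1/2 - a)) + 1 * (s - 1/2)) at 2
      by (unfold a; nra).
    apply chas with (1/2); [|apply hw3; lra].
    apply chas with a; [apply hw1; lra|apply hw2; lra]. }
  split.
  { constructor. apply ex_RInt_Reals_0. exists 1. apply hW; lra. }
  split.
  { unfold L2norm01.
    rewrite (Rint_is _ 0 1 ((0 + c^2 * (1/2 - a)) + 1 * (1 - 1/2))).
    - rewrite <- (sqrt_pow2 Rr) by lra. apply sqrt_le_1_alt.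
      rewrite Ha3. replace (c^2 * d) with (c * (c * d)) by ring. rewrite Hcd.
      unfold c. nra.
    - apply chas with (1/2).
      + apply chas with a.
        * apply piece0; [lra|].
          intros t Ht. unfold w. destruct (Rlt_dec t a); [ring|lra].
        * apply piece; [lra|].
          intros t Ht. unfold w. destruct (Rlt_dec t a); [lra|].
          destruct (Rlt_dec t (1/2)); [ring|lra].
      + apply piece; [lra|].
        intros t Ht. unfold w. destruct (Rlt_dec t a); [lra|].
        destruct (Rlt_dec t (1/2)); [lra|ring]. }
  set (g := fun s => (u_half s - cesaro w s) ^ 2).
  set (h := fun s => (0 - / s * (c * (s - a))) ^ 2).
  assert (hg1 : is_RInt g 0 a 0).
  { apply piece0; [lra|].
    intros t Ht. unfold g, cesaro, u_half.
    rewrite (Rint_is w 0 t 0) by (apply hw1; lra).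
    destruct (Rlt_dec t (1/2)); [ring|lra]. }
  assert (hg3 : is_RInt g (1/2) 1 0).
  { apply piece0; [lra|].
    intros t Ht. unfold g, cesaro, u_half.
    rewrite (Rint_is w 0 t t) by (apply hW; lra).
    destruct (Rlt_dec t (1/2)); [lra|]. field. lra. }
  assert (hext : forall x, Rmin a (1/2) < x < Rmax a (1/2) -> h x = g x).
  { intros t Ht. rewrite Rmin_left in Ht by lra. rewrite Rmax_right in Ht by lra.
    unfold g, h, cesaro, u_half.
    rewrite (Rint_is w 0 t (0 + c * (t - a))).
    - destruct (Rlt_dec t (1/2)); [|lra]. f_equal. ring.
    - apply chas with a; [apply hw1; lra|apply hw2; lra]. }
  assert (hh : ex_RInt h a (1/2)).
  { apply (@ex_RInt_continuous R_CompleteNormedModule). intros z Hz.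
    rewrite Rmin_left in Hz by lra. rewrite Rmax_right in Hz by lra.
    apply (@ex_derive_continuous R_AbsRing R_NormedModule). unfold h. auto_derive. lra. }
  assert (hg2 : ex_RInt g a (1/2)) by (apply (ex_RInt_ext h); assumption).
  destruct hg2 as [l Hl].
  assert (Hlb : l <= 4 * d).
  { rewrite <- (is_RInt_unique _ _ _ _ Hl).
    rewrite <- (RInt_ext h g a (1/2) hext).
    apply Rle_trans with (RInt (fun _ => 4) a (1/2)).
    - apply RInt_le; [lra|exact hh|apply ex_RInt_const|].
      intros x Hx. unfold h.
      assert (Hs1 : 0 <= / x <= 4).
      { split. left; apply Rinv_0_lt_compat; lra.
        replace 4 with (/ (1/4)) by field. apply Rinv_le_contravar; lra. }
      assert (Hs2 : 0 <= c * (x - a) <= 1/2).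
      { assert (0 < c) by (unfold c; nra). split; [nra|].
        rewrite <- Hcd. apply Rmult_le_compat_l; lra. }
      assert (0 <= / x * (c * (x - a)) <= 2) by nra. nra.
    - rewrite RInt_const. unfold scal; simpl; unfold mult; simpl. unfold a. lra. }
  unfold L2norm01. fold g.
  rewrite (Rint_is g 0 1 ((0 + l) + 0)).
  - replace (2 / Rr) with (sqrt ((2 / Rr) ^ 2)).
    + apply sqrt_le_1_alt. replace ((2/Rr)^2) with (4 * d) by (unfold d; field; lra). lra.
    + apply sqrt_pow2. apply Rlt_le. apply Rdiv_lt_0_compat; lra.
  - apply chas with (1/2); [|exact hg3]. apply chas with a; assumption.
Qed.
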